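(* Let $\Omega\subset\mathbb{R}^n$ be a domain with $\mathrm{width}(\Omega)<+\infty$, $f\in L^\infty(\Omega)$, $g\in C(\partial\Omega)\cap L^\infty(\partial\Omega)$, $(\varepsilon_i)$ a sequence of positive numbers with $\varepsilon_i\to0$, and for each $i$ let $u_i:\overline\Omega\to\mathbb{R}$ be a bounded solution of $\Delta^{\varepsilon_i}_\infty u_i=\varepsilon_i^2 f$ in $\Omega$, $u_i=g$ on $\partial\Omega$. Then the functions $u_i$ are uniformly bounded, i.e. $\sup_i\sup_{\overline\Omega}|u_i|<+\infty$.
   Context: $d(x,y)$ is the intrinsic metric of $\overline\Omega$ (infimum of lengths of paths in $\overline\Omega$ from $x$ to $y$); $\mathrm{width}(\Omega)=\sup_{x\in\Omega}\inf_{y\in\partial\Omega}d(y,x)$. For $\varepsilon>0$, $B_x(\varepsilon)=\{y\in\overline\Omega: d(x,y)<\varepsilon\}$ and $\Delta^{\varepsilon}_\infty w(x)=\inf_{y\in B_x(\varepsilon)}w(y)+\sup_{y\in B_x(\varepsilon)}w(y)-2w(x)$. *)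

(* Defs.v *)
From HB Require Import structures.
From mathcomp Require Import all_boot all_order all_algebra.
From mathcomp Require Import all_classical all_reals all_analysis.
Set Implicit Arguments. Unset Strict Implicit. Unset Printing Implicit Defensive.
Import Order.TTheory GRing.Theory Num.Theory.
Import numFieldNormedType.Exports.
Local Open Scope classical_set_scope.
Local Open Scope ring_scope.

Section Defs.
Context {R : realType} {n : nat}.
Notation V := 'rV[R]_n.

Definition enorm (v : V) : R := Num.sqrt (\sum_(i < n) (v ord0 i) ^+ 2).

Definition bdry (A : set V) : set V := closure A `\` interior A.

Definition path_length (gamma : R -> V) : \bar R :=
  ereal_sup [set l | exists (m : nat) (t : nat -> R),
     [/\ t 0%N = 0, t m = 1,
        (forall k, (k < m)%N -> t k <= t k.+1) &
        l = (\sum_(k < m) enorm (gamma (t k.+1) - gamma (t k)))%:E]].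

Definition path_in (A : set V) (x y : V) (gamma : R -> V) : Prop :=
  {within `[0, 1], continuous gamma} /\
  (forall t, 0 <= t <= 1 -> A (gamma t)) /\ gamma 0 = x /\ gamma 1 = y.

Definition idist (Omega : set V) (x y : V) : \bar R :=
  ereal_inf [set path_length gamma | gamma in path_in (closure Omega) x y].

Definition width (Omega : set V) : \bar R :=
  ereal_sup [set ereal_inf [set idist Omega y x | y in bdry Omega]
            | x in Omega].

Definition iball (Omega : set V) (x : V) (eps : R) : set V :=
  [set y | closure Omega y /\ (idist Omega x y < eps%:E)%E].

Definition dlap (Omega : set V) (eps : R) (w : V -> R) (x : V) : R :=
  inf [set w y | y in iball Omega x eps] + sup [set w y | y in iball Omega x eps]
  - 2 * w x.

End Defs.

(* Main.v *)
Require Import Defs.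
From HB Require Import structures.
From mathcomp Require Import all_boot all_order all_algebra.
From mathcomp Require Import all_classical all_reals all_analysis.
From mathcomp Require Import ring lra zify.
Import Order.TTheory GRing.Theory Num.Theory.
Import numFieldNormedType.Exports.
Local Open Scope classical_set_scope.
Local Open Scope ring_scope.
Set Implicit Arguments. Unset Strict Implicit. Unset Printing Implicit Defensive.

Section Enorm.
Context {R : realType} {n : nat}.
Notation V := 'rV[R]_n.

Lemma enorm_ge0 (v : V) : 0 <= enorm v.
Proof. exact: sqrtr_ge0. Qed.

Lemma enorm0 : enorm (0 : V) = 0.
Proof.
rewrite /enorm big1 ?sqrtr0 // => i _; by rewrite mxE expr0n.
Qed.

Lemma enormN (v : V) : enorm (- v) = enorm v.
Proof.
rewrite /enorm; congr Num.sqrt; apply: eq_bigr => i _; by rewrite mxE sqrrN.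
Qed.

Lemma enormB (a b : V) : enorm (a - b) = enorm (b - a).
Proof. by rewrite -enormN opprB. Qed.

Lemma sum_sq_ge0 (a : 'I_n -> R) : 0 <= \sum_(i < n) a i ^+ 2.
Proof. by apply: sumr_ge0 => i _; exact: sqr_ge0. Qed.

Lemma cauchy_schwarz (a b : 'I_n -> R) :
  \sum_(i < n) a i * b i <=
  Num.sqrt (\sum_(i < n) a i ^+ 2) * Num.sqrt (\sum_(i < n) b i ^+ 2).
Proof.
set A := Num.sqrt _; set B := Num.sqrt _.
have A0 : 0 <= A by exact: sqrtr_ge0.
have B0 : 0 <= B by exact: sqrtr_ge0.
have AA : A ^+ 2 = \sum_(i < n) a i ^+ 2 by rewrite sqr_sqrtr // sum_sq_ge0.
have BB : B ^+ 2 = \sum_(i < n) b i ^+ 2 by rewrite sqr_sqrtr // sum_sq_ge0.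
have [Az|Ap] := eqVneq A 0.
  have : \sum_(i < n) a i ^+ 2 == 0 by rewrite -AA Az expr0n.
  rewrite psumr_eq0; last by move=> i _; exact: sqr_ge0.
  move=> /allP H; rewrite Az mul0r big1 // => i _.
  move: (H i (mem_index_enum _)) => /=; rewrite sqrf_eq0 => /eqP ->.
  by rewrite mul0r.
have [Bz|Bp] := eqVneq B 0.
  have : \sum_(i < n) b i ^+ 2 == 0 by rewrite -BB Bz expr0n.
  rewrite psumr_eq0; last by move=> i _; exact: sqr_ge0.
  move=> /allP H; rewrite Bz mulr0 big1 // => i _.
  move: (H i (mem_index_enum _)) => /=; rewrite sqrf_eq0 => /eqP ->.
  by rewrite mulr0.
have Agt : 0 < A by rewrite lt_def Ap A0.
have Bgt : 0 < B by rewrite lt_def Bp B0.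
set t := B / A.
have tgt : 0 < t by rewrite divr_gt0.
have key : forall i, a i * b i <= (t * a i ^+ 2 + t^-1 * b i ^+ 2) / 2.
  move=> i.
  have : 0 <= (t * a i - b i) ^+ 2 / t by rewrite divr_ge0 ?sqr_ge0 ?ltW.
  have tn0 : t != 0 by rewrite gt_eqF.
  have -> : (t * a i - b i) ^+ 2 / t = t * a i ^+ 2 + t^-1 * b i ^+ 2 - 2 * (a i * b i).
    by field.
  move=> h; rewrite ler_pdivlMr //; lra.
apply: (le_trans (ler_sum _ (fun i _ => key i))).
rewrite -mulr_suml big_split /= -!mulr_sumr -AA -BB /t.
have An0 : A != 0 by [].
rewrite le_eqVlt; apply/orP; left; apply/eqP; field; by rewrite Ap Bp.
Qed.

Lemma enormD (a b : V) : enorm (a + b) <= enorm a + enorm b.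
Proof.
rewrite /enorm.
set A := Num.sqrt (\sum_(i < n) a ord0 i ^+ 2).
set B := Num.sqrt (\sum_(i < n) b ord0 i ^+ 2).
have A0 : 0 <= A by exact: sqrtr_ge0.
have B0 : 0 <= B by exact: sqrtr_ge0.
have AA : A ^+ 2 = \sum_(i < n) a ord0 i ^+ 2.
  by rewrite sqr_sqrtr //; apply: sumr_ge0 => i _; exact: sqr_ge0.
have BB : B ^+ 2 = \sum_(i < n) b ord0 i ^+ 2.
  by rewrite sqr_sqrtr //; apply: sumr_ge0 => i _; exact: sqr_ge0.
have CS := cauchy_schwarz (fun i => a ord0 i) (fun i => b ord0 i).
rewrite -/A -/B in CS.
rewrite -(ger0_norm (addr_ge0 A0 B0)) -sqrtr_sqr.
apply: ler_wsqrtr.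
have -> : \sum_(i < n) (a + b) ord0 i ^+ 2 =
   \sum_(i < n) a ord0 i ^+ 2 + 2 * \sum_(i < n) (a ord0 i * b ord0 i) + \sum_(i < n) b ord0 i ^+ 2.
  rewrite mulr_sumr -!big_split /=; apply: eq_bigr => i _; rewrite mxE; ring.
rewrite -AA -BB; nra.
Qed.

Lemma enorm_tri (a b c : V) : enorm (a - c) <= enorm (a - b) + enorm (b - c).
Proof. by have := enormD (a - b) (b - c); rewrite addrA subrK. Qed.

Lemma enorm_le_mx (v : V) : enorm v <= n%:R * `|v|.
Proof.
have N0 : 0 <= `|v| by [].
have Hi : forall i, `|v ord0 i| <= `|v|.
  move=> i; rewrite [leRHS]/Num.Def.normr /= mx_normrE.
  apply/bigmax_geP; right => /=; by exists (ord0, i).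
have nN0 : 0 <= n%:R * `|v| by rewrite mulr_ge0.
rewrite /enorm -(ger0_norm nN0) -sqrtr_sqr; apply: ler_wsqrtr.
apply: (le_trans (y := \sum_(i < n) `|v| ^+ 2)).
  apply: ler_sum => i _; rewrite -real_normK ?num_real //.
  by rewrite lerXn2r // ?nnegrE.
rewrite sumr_const card_ord exprMn -(mulr_natl (`|v| ^+ 2) n) ler_wpM2r ?sqr_ge0 // -natrX ler_nat.
rewrite expnS expn1; case: (posnP n) => [->//|np]; exact: leq_pmulr.
Qed.

End Enorm.

Section Parts.
Context {R : realType} {n : nat}.
Notation V := 'rV[R]_n.
Implicit Types (gam : R -> V) (t p q : nat -> R) (a b c L : R).

Definition PS gam m t : R := \sum_(k < m) enorm (gam (t k.+1) - gam (t k)).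

Definition part a b m t : Prop :=
  [/\ t 0%N = a, t m = b & forall k, (k < m)%N -> t k <= t k.+1].

Definition lenle gam a b L : Prop := forall m t, part a b m t -> PS gam m t <= L.

Lemma PS_ge0 gam m t : 0 <= PS gam m t.
Proof. by apply: sumr_ge0 => k _; exact: enorm_ge0. Qed.

Lemma part_mono a b m t : part a b m t ->
  forall i j, (i <= j <= m)%N -> t i <= t j.
Proof.
case=> _ _ mon i j /andP[ij jm].
elim: j ij jm => [|j IH] ij jm.
  by rewrite leqn0 in ij; rewrite (eqP ij).
rewrite leq_eqVlt in ij; case/orP: ij => [/eqP->//|ij].
apply: le_trans (IH ij (ltnW jm)) (mon j jm).
Qed.

Lemma part_in a b m t : part a b m t -> forall k, (k <= m)%N -> a <= t k <= b.
Proof.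
move=> P k km; have [t0 tm _] := P.
apply/andP; split; [rewrite -{1}t0 | rewrite -{1}tm]; apply: (part_mono P).
  by rewrite leq0n km.
by rewrite km leqnn.
Qed.

Lemma part_le a b m t : part a b m t -> a <= b.
Proof. by move=> P; have /andP[h1 h2] := part_in P (leqnn m); apply: le_trans h1 h2. Qed.

Definition part1 a b : nat -> R := fun k => if k == 0%N then a else b.

Lemma part1P a b : a <= b -> part a b 1 (part1 a b).
Proof. by move=> ab; split => // -[|k] //. Qed.

Lemma PS1 gam a b : PS gam 1 (part1 a b) = enorm (gam b - gam a).
Proof. by rewrite /PS big_ord1. Qed.

Lemma clampP a b c m t : a <= c <= b -> part a b m t ->
  [/\ part a c m (fun k => Order.min (t k) c),
      part c b m (fun k => Order.max (t k) c) &
      forall gam, PS gam m t <=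
        PS gam m (fun k => Order.min (t k) c) + PS gam m (fun k => Order.max (t k) c)].
Proof.
move=> /andP[ac cb] P; have [t0 tm mon] := P.
split.
- split; first by rewrite t0 min_l.
  + by rewrite tm min_r.
  + by move=> k km; apply: le_min2 => //; exact: mon.
- split; first by rewrite t0 max_r.
  + by rewrite tm max_l.
  + by move=> k km; apply: le_max2 => //; exact: mon.
move=> gam; rewrite /PS -big_split /=; apply: ler_sum => k _.
have mk := mon k (ltn_ord k).
have [h1|h1] := leP (t k.+1) c.
  have h0 : t k <= c by apply: le_trans mk h1.
  by rewrite (min_l h0) (max_r h0) subrr enorm0 addr0.
have [h0|h0] := leP (t k) c.
  by rewrite addrC enorm_tri.
by rewrite subrr enorm0 add0r.
Qed.

Definition pcat m1 p q : nat -> R := fun k => if (k <= m1)%N then p k else q (k - m1)%N.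

Lemma pcatP a b c m1 m2 p q : part a c m1 p -> part c b m2 q ->
  part a b (m1 + m2) (pcat m1 p q) /\
  forall gam, PS gam (m1 + m2) (pcat m1 p q) = PS gam m1 p + PS gam m2 q.
Proof.
move=> P Q; have [p0 pm pmon] := P; have [q0 qm qmon] := Q.
split.
  split; first by rewrite /pcat leq0n.
  + rewrite /pcat; case: ifP => h.
      have m20 : m2 = 0%N by move: h; rewrite -{2}(addn0 m1) leq_add2l leqn0 => /eqP.
      by rewrite m20 addn0 pm -q0 -qm m20.
    by rewrite addKn.
  + move=> k km; rewrite /pcat.
    case: (leqP k.+1 m1) => h.
      by rewrite (ltnW h); apply: pmon.
    case: (leqP k m1) => h'.
      have km1 : k = m1 by apply/eqP; rewrite eqn_leq h'.
      subst k; rewrite subSnn pm -q0; apply: qmon; lia.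
    rewrite subSn; last lia.
    apply: qmon; lia.
move=> gam; rewrite /PS big_split_ord /=; congr (_ + _).
  apply: eq_bigr => k _; rewrite /pcat /=.
  have k1 : (k < m1)%N := ltn_ord k.
  by rewrite k1 (ltnW k1).
apply: eq_bigr => k _; rewrite /pcat /=.
have -> : (m1 + k < m1)%N = false by apply/negbTE; lia.
have -> : ((m1 + k).+1 - m1 = k.+1)%N by lia.
case: (posnP k) => [->|kp].
  by rewrite addn0 leqnn pm q0.
have -> : (m1 + k <= m1)%N = false by apply/negbTE; lia.
by have -> : (m1 + k - m1 = k)%N by lia.
Qed.

Lemma lenle_sub gam L a b : lenle gam 0 1 L -> 0 <= a -> a <= b -> b <= 1 ->
  lenle gam a b L.
Proof.
move=> H a0 ab b1 m t P.
have [P3 E3] := pcatP (part1P a0) P.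
have [P4 E4] := pcatP P3 (part1P b1).
have := H _ _ P4; rewrite E4 E3 PS1 PS1.
have := enorm_ge0 (gam a - gam 0); have := enorm_ge0 (gam 1 - gam b); lra.
Qed.

End Parts.

Section Len.
Context {R : realType} {n : nat}.
Notation V := 'rV[R]_n.
Variables (gam : R -> V) (L : R).
Hypothesis HL : lenle gam 0 1 L.

Definition lenset a b : set R := [set x | exists m t, part a b m t /\ x = PS gam m t].
Definition len a b : R := sup (lenset a b).

Lemma lenset_n0 a b : a <= b -> lenset a b !=set0.
Proof. by move=> ab; exists (PS gam 1 (part1 a b)); exists 1%N, (part1 a b); split => //; exact: part1P. Qed.

Lemma lenset_sup a b : 0 <= a -> a <= b -> b <= 1 -> has_sup (lenset a b).
Proof.
move=> a0 ab b1; split; first exact: lenset_n0.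
exists L => x [m [t [P ->]]]; exact: (lenle_sub HL a0 ab b1).
Qed.

Lemma len_ub a b m t : 0 <= a -> a <= b -> b <= 1 -> part a b m t -> PS gam m t <= len a b.
Proof.
move=> a0 ab b1 P; apply: (sup_upper_bound (lenset_sup a0 ab b1)).
by exists m, t.
Qed.

Lemma len_le a b M : a <= b -> lenle gam a b M -> len a b <= M.
Proof.
move=> ab H; apply: ge_sup; first exact: lenset_n0.
by move=> x [m [t [P ->]]]; exact: H.
Qed.

Lemma len_ge0 a b : 0 <= a -> a <= b -> b <= 1 -> 0 <= len a b.
Proof.
move=> a0 ab b1; apply: le_trans (PS_ge0 gam 1 (part1 a b)) _.
exact: len_ub (part1P ab).
Qed.

Lemma len_enorm a b : 0 <= a -> a <= b -> b <= 1 -> enorm (gam b - gam a) <= len a b.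
Proof. by move=> a0 ab b1; rewrite -PS1; exact: len_ub (part1P ab). Qed.

Lemma len_adh a b e : 0 <= a -> a <= b -> b <= 1 -> 0 < e ->
  exists m t, part a b m t /\ len a b - e < PS gam m t.
Proof.
move=> a0 ab b1 e0; have [x [m [t [P ->]]] h] := sup_adherent e0 (lenset_sup a0 ab b1).
by exists m, t.
Qed.

Lemma len_sub a c b : 0 <= a -> a <= c -> c <= b -> b <= 1 -> len a b <= len a c + len c b.
Proof.
move=> a0 ac cb b1; apply: len_le; first exact: le_trans ac cb.
move=> m t P; have acb : a <= c <= b by rewrite ac cb.
have [P1 P2 H] := clampP (n:=n) acb P.
apply: le_trans (H gam) _; apply: lerD.
  exact: len_ub (a0) ac (le_trans cb b1) P1.
exact: len_ub (le_trans a0 ac) cb b1 P2.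
Qed.

Lemma len_sup a c b : 0 <= a -> a <= c -> c <= b -> b <= 1 -> len a c + len c b <= len a b.
Proof.
move=> a0 ac cb b1.
have ab := le_trans ac cb.
suff H : forall m2 q, part c b m2 q -> len a c <= len a b - PS gam m2 q.
  have : len c b <= len a b - len a c.
    apply: len_le => // m2 q Q; have := H m2 q Q; lra.
  lra.
move=> m2 q Q; apply: len_le => // m1 p P.
have [P3 E3] := pcatP (n:=n) P Q.
have := len_ub a0 ab b1 P3; rewrite E3; lra.
Qed.

Lemma len_add a c b : 0 <= a -> a <= c -> c <= b -> b <= 1 -> len a b = len a c + len c b.
Proof.
move=> a0 ac cb b1; apply/eqP; rewrite eq_le len_sub // len_sup //.
Qed.

Lemma len_refl a : 0 <= a -> a <= 1 -> len a a = 0.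
Proof.
move=> a0 a1; apply/eqP; rewrite eq_le len_ge0 // andbT.
apply: len_le => // m t P; rewrite /PS big1 // => k _.
have /andP[h1 h2] := part_in P (ltnW (ltn_ord k)).
have /andP[h3 h4] := part_in P (ltn_ord k).
have -> : t k = a by apply/eqP; rewrite eq_le h1 h2.
have -> : t k.+1 = a by apply/eqP; rewrite eq_le h3 h4.
by rewrite subrr enorm0.
Qed.

Lemma len_mono a c b : 0 <= a -> a <= c -> c <= b -> b <= 1 -> len a c <= len a b.
Proof.
move=> a0 ac cb b1; have := len_sup a0 ac cb b1.
have := len_ge0 (le_trans a0 ac) cb b1; lra.
Qed.

End Len.

Section Within.
Context {R : realType}.

Lemma withinP (V : normedModType R) (A : set R) (f : R -> V) :
  {within A, continuous f} <->
  (forall x, A x -> forall e, 0 < e -> exists2 d, 0 < d &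
     forall y, A y -> `|x - y| < d -> `|f x - f y| < e).
Proof.
split.
  move=> /subspace_continuousP H x Ax e e0.
  have := H x Ax; move/cvgrPdist_lt => /(_ e e0).
  rewrite near_withinE => /nbhs_normP [d d0 Hd].
  exists d => // y Ay xy; apply: (Hd y) => //=.
move=> H; apply/subspace_continuousP => x Ax.
apply/cvgrPdist_lt => e e0.
rewrite near_withinE; apply/nbhs_normP.
have [d d0 Hd] := H x Ax e e0.
exists d => //= y xy Ay; exact: Hd.
Qed.

End Within.

Section LenCont.
Context {R : realType} {n : nat}.
Notation V := 'rV[R]_n.
Variables (gam : R -> V) (L : R).
Hypothesis HL : lenle gam 0 1 L.
Hypothesis Hc : {within `[0, 1], continuous gam}.

Lemma in01 (x : R) : (`[0, 1]%classic : set R) x <-> 0 <= x <= 1.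
Proof. by rewrite /= in_itv. Qed.

Lemma gamc x e : 0 <= x <= 1 -> 0 < e -> exists2 d, 0 < d &
  forall y, 0 <= y <= 1 -> `|x - y| < d -> enorm (gam x - gam y) < e.
Proof.
move=> x01 e0.
have e1 : 0 < e / (n%:R + 1) by rewrite divr_gt0 // ltr_wpDl.
have [d d0 Hd] := (proj1 (withinP _ gam) Hc) x (proj2 (in01 x) x01) _ e1.
exists d => // y y01 xy.
have := Hd y (proj2 (in01 y) y01) xy => h.
apply: le_lt_trans (enorm_le_mx _) _.
have n0 : 0 <= (n%:R : R) by [].
have N0 : 0 <= `|gam x - gam y| by [].
have : n%:R * `|gam x - gam y| <= n%:R * (e / (n%:R + 1)) by rewrite ler_wpM2l // ltW.
move=> h1; apply: le_lt_trans h1 _.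
rewrite mulrA ltr_pdivrMr ?ltr_wpDl //; nra.
Qed.

Lemma sum_small m (F : nat -> R) c : (forall k, (k < m)%N -> F k <= c) ->
  \sum_(k < m) F k <= m%:R * c.
Proof.
move=> H; apply: (le_trans (y := \sum_(k < m) c)); first by apply: ler_sum => k _; exact: H.
by rewrite sumr_const card_ord mulr_natl.
Qed.

Lemma len_rc t0 e : 0 <= t0 <= 1 -> 0 < e -> exists2 d, 0 < d &
  forall t, t0 <= t <= 1 -> t - t0 < d -> len gam t0 t < e.
Proof.
move=> /andP[t00 t01] e0.
have e2 : 0 < e / 2 by rewrite divr_gt0.
have [m [t [P Pge]]] := len_adh HL t00 t01 (lexx 1) e2.
have tol0 : 0 < e / (4 * (m%:R + 1)) by rewrite divr_gt0 // mulr_gt0 // ltr_wpDl.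
have [d d0 Hd] := gamc (x := t0) (e := e / (4 * (m%:R + 1))) ltac:(by rewrite t00 t01) tol0.
set t' := Order.min (t0 + d / 2) 1.
have d2 : 0 < d / 2 by rewrite divr_gt0.
have t't0 : t0 <= t' by rewrite le_min t01 lerDl ltW.
have t'1 : t' <= 1 by rewrite ge_min lexx orbT.
have t'd : t' - t0 < d.
  have : t' <= t0 + d / 2 by rewrite ge_min lexx.
  lra.
have acb : t0 <= t' <= 1 by rewrite t't0 t'1.
have [P1 P2 H] := clampP (n:=n) acb P.
have Hp : PS gam m (fun k => Order.min (t k) t') <= e / 2.
  rewrite /PS; apply: le_trans (sum_small (F := fun k => enorm (gam (Order.min (t k.+1) t') - gam (Order.min (t k) t'))) (c := e / (2 * (m%:R + 1))) _) _.
    move=> k km.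
    have inI : forall j, (j <= m)%N -> t0 <= Order.min (t j) t' <= t'.
      move=> j jm; have /andP[h1 h2] := part_in P1 jm; by rewrite h1 h2.
    have cl : forall j, (j <= m)%N -> enorm (gam t0 - gam (Order.min (t j) t')) < e / (4 * (m%:R + 1)).
      move=> j jm; have /andP[h1 h2] := inI j jm.
      apply: Hd.
        by rewrite (le_trans t00 h1) (le_trans h2 t'1).
      rewrite ler0_norm ?subr_le0 //; lra.
    have c1 := cl k.+1 km; have c2 := cl k (ltnW km).
    rewrite enormB in c1.
    apply: le_trans (enorm_tri _ (gam t0) _) _.
    have -> : e / (2 * (m%:R + 1)) = e / (4 * (m%:R + 1)) + e / (4 * (m%:R + 1)).
      by field; rewrite gt_eqF // ltr_wpDl.
    apply: lerD; exact: ltW.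
  have hm : (0:R) < m%:R + 1 by rewrite ltr_wpDl.
  rewrite mulrA ler_pdivrMr ?mulr_gt0 //.
  have : (0 : R) <= m%:R by []. 
  nra.
have Hq : PS gam m (fun k => Order.max (t k) t') <= len gam t' 1 := len_ub HL (le_trans t00 t't0) t'1 (lexx 1) P2.
have Ha := len_add HL t00 t't0 t'1 (lexx 1).
have Hlt : len gam t0 t' < e.
  have := H gam; lra.
exists (d / 2) => // s /andP[t0s s1] sd.
apply: le_lt_trans _ Hlt.
have st' : s <= t' by rewrite /t' le_min s1 andbT; lra.
have h := len_mono HL t00 t0s st' t'1. exact h.
Qed.

Lemma len_lc t0 e : 0 <= t0 <= 1 -> 0 < e -> exists2 d, 0 < d &
  forall t, 0 <= t <= t0 -> t0 - t < d -> len gam t t0 < e.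
Proof.
move=> /andP[t00 t01] e0.
have e2 : 0 < e / 2 by rewrite divr_gt0.
have [m [t [P Pge]]] := len_adh HL (lexx 0) t00 t01 e2.
have tol0 : 0 < e / (4 * (m%:R + 1)) by rewrite divr_gt0 // mulr_gt0 // ltr_wpDl.
have [d d0 Hd] := gamc (x := t0) (e := e / (4 * (m%:R + 1))) ltac:(by rewrite t00 t01) tol0.
set t' := Order.max (t0 - d / 2) 0.
have d2 : 0 < d / 2 by rewrite divr_gt0.
have t't0 : t' <= t0 by rewrite ge_max t00 andbT; lra.
have t'0 : 0 <= t' by rewrite le_max lexx orbT.
have t'd : t0 - t' < d.
  have : t0 - d / 2 <= t' by rewrite le_max lexx.
  lra.
have acb : 0 <= t' <= t0 by rewrite t't0 t'0.
have [P1 P2 H] := clampP (n:=n) acb P.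
have Hp : PS gam m (fun k => Order.max (t k) t') <= e / 2.
  rewrite /PS; apply: le_trans (sum_small (F := fun k => enorm (gam (Order.max (t k.+1) t') - gam (Order.max (t k) t'))) (c := e / (2 * (m%:R + 1))) _) _.
    move=> k km.
    have inI : forall j, (j <= m)%N -> t' <= Order.max (t j) t' <= t0.
      move=> j jm; have /andP[h1 h2] := part_in P2 jm; by rewrite h1 h2.
    have cl : forall j, (j <= m)%N -> enorm (gam t0 - gam (Order.max (t j) t')) < e / (4 * (m%:R + 1)).
      move=> j jm; have /andP[h1 h2] := inI j jm.
      apply: Hd.
        by rewrite (le_trans t'0 h1) (le_trans h2 t01).
      rewrite ger0_norm ?subr_ge0 //; lra.
    have c1 := cl k.+1 km; have c2 := cl k (ltnW km).
    rewrite enormB in c1.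
    apply: le_trans (enorm_tri _ (gam t0) _) _.
    have -> : e / (2 * (m%:R + 1)) = e / (4 * (m%:R + 1)) + e / (4 * (m%:R + 1)).
      by field; rewrite gt_eqF // ltr_wpDl.
    apply: lerD; exact: ltW.
  have hm : (0:R) < m%:R + 1 by rewrite ltr_wpDl.
  rewrite mulrA ler_pdivrMr ?mulr_gt0 //.
  have : (0 : R) <= m%:R by []. 
  nra.
have Hq : PS gam m (fun k => Order.min (t k) t') <= len gam 0 t' := len_ub HL (lexx 0) t'0 (le_trans t't0 t01) P1.
have Ha := len_add HL (lexx 0) t'0 t't0 t01.
have Hlt : len gam t' t0 < e.
  have := H gam; lra.
exists (d / 2) => // s /andP[s0 st0] sd.
apply: le_lt_trans _ Hlt.
have st' : t' <= s by rewrite /t' ge_max s0 andbT; lra.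
have h := len_sup HL t'0 st' st0 t01.
have h2 := len_ge0 HL t'0 st' (le_trans st0 t01).
lra.
Qed.

End LenCont.

Section Phi.
Context {R : realType} {n : nat}.
Notation V := 'rV[R]_n.
Variables (gam : R -> V) (L : R).
Hypothesis HL : lenle gam 0 1 L.
Hypothesis Hc : {within `[0, 1], continuous gam}.

Definition phi (t : R) := len gam 0 t.

Lemma phi_diff x y : 0 <= x -> x <= y -> y <= 1 -> phi y - phi x = len gam x y.
Proof. by move=> x0 xy y1; rewrite /phi (len_add HL (lexx 0) x0 xy y1) addrAC subrr add0r. Qed.

Lemma phi_cont a : 0 <= a -> {within `[a, 1], continuous phi}.
Proof.
move=> a0; apply/withinP => x /= /[!in_itv] /= /andP[ax x1] e e0.
have x01 : 0 <= x <= 1 by rewrite (le_trans a0 ax) x1.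
have [d1 d10 H1] := len_rc HL Hc x01 e0.
have [d2 d20 H2] := len_lc HL Hc x01 e0.
exists (Order.min d1 d2); first by rewrite lt_min d10 d20.
move=> y /= /[!in_itv] /= /andP[ay y1] xy.
have y0 : 0 <= y by apply: le_trans a0 ay.
have [hxy|hxy] := leP x y.
  rewrite -normrN opprB phi_diff //; last exact: le_trans a0 ax.
  rewrite ger0_norm; last by have h := len_ge0 HL (le_trans a0 ax) hxy y1; exact h.
  apply: H1; first by rewrite hxy y1.
  have : `|x - y| < d1 by apply: lt_le_trans xy _; rewrite ge_min lexx.
  by rewrite -normrN opprB ger0_norm ?subr_ge0.
rewrite phi_diff //; last exact: ltW.
rewrite ger0_norm; last by have h := len_ge0 HL y0 (ltW hxy) x1; exact h.
apply: H2; first by rewrite y0 ltW.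
have : `|x - y| < d2 by apply: lt_le_trans xy _; rewrite ge_min lexx orbT.
by rewrite ger0_norm // subr_ge0 ltW.
Qed.

Lemma phi_ivt a v : 0 <= a -> a <= 1 -> phi a <= v -> v <= phi 1 ->
  exists c, a <= c <= 1 /\ phi c = v.
Proof.
move=> a0 a1 h1 h2.
have [c cin cv] := IVT a1 (phi_cont a0) (v := v) ltac:(rewrite (min_l (le_trans h1 h2)) (max_r (le_trans h1 h2)) h1 h2 //).
by exists c; split => //; move: cin; rewrite in_itv.
Qed.

Lemma phi0 : phi 0 = 0.
Proof. have h := len_refl HL (lexx 0) ler01. exact h. Qed.

End Phi.

Section Paths.
Context {R : realType} {n : nat}.
Notation V := 'rV[R]_n.
Implicit Types (gam : R -> V) (Om A : set V).

Lemma PS_path_length gam m t : part 0 1 m t -> ((PS gam m t)%:E <= path_length gam)%E.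
Proof.
move=> [t0 tm mon]; apply: le_ereal_sup_tmp.
by exists (PS gam m t)%:E => //; exists m, t; split.
Qed.

Lemma path_length_lenle gam (L : R) : (path_length gam <= L%:E)%E -> lenle gam 0 1 L.
Proof.
move=> H m t P; rewrite -lee_fin; exact: le_trans (PS_path_length gam P) H.
Qed.

Lemma path_length_le gam (L : R) : lenle gam 0 1 L -> (path_length gam <= L%:E)%E.
Proof.
move=> H; apply/ereal_supP => l [m [t [t0 tm mon ->]]].
by rewrite lee_fin; apply: H.
Qed.

Lemma idist_le Om x y gam : path_in (closure Om) x y gam ->
  (idist Om x y <= path_length gam)%E.
Proof. by move=> P; apply: ge_ereal_inf; exists (path_length gam) => //; exists gam. Qed.

Lemma path_rev A x y gam : path_in A x y gam ->
  path_in A y x (fun s => gam (1 - s)) /\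
  (path_length (fun s => gam (1 - s)%R) <= path_length gam)%E.
Proof.
move=> [Hc [HA [g0 g1]]]; split.
  split.
    apply/withinP => s /= /[!in_itv] /= /andP[s0 s1] e e0.
    have := (proj1 (withinP _ gam) Hc) (1 - s).
    rewrite /= in_itv /=; move=> /(_ ltac:(apply/andP; split; lra) e e0) [d d0 Hd].
    exists d => // s' /= /[!in_itv] /= /andP[s'0 s'1] ss'.
    apply: Hd; first by rewrite /= in_itv /=; apply/andP; split; lra.
    have -> : 1 - s - (1 - s') = s' - s by ring.
    by rewrite -normrN opprB.
  split; first by move=> s /andP[s0 s1]; apply: HA; apply/andP; split; lra.
  by rewrite subr0 subrr.
apply/ereal_supP => l [m [t [t0 tm mon ->]]].
apply: le_ereal_sup_tmp.
exists (PS gam m (fun k => 1 - t (m - k)%N))%:E.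
  exists m, (fun k => 1 - t (m - k)%N); split.
  - by rewrite subn0 tm subrr.
  - by rewrite subnn t0 subr0.
  - move=> k km; rewrite lerD2l lerN2.
    have -> : (m - k = (m - k.+1).+1)%N by lia.
    apply: mon; lia.
  - by [].
rewrite lee_fin le_eqVlt; apply/orP; left; apply/eqP.
rewrite /PS (reindex_inj rev_ord_inj) /=; apply: eq_bigr => k _.
have -> : ((m - k.+1).+1 = m - k)%N by have := ltn_ord k; lia.
by rewrite enormB.
Qed.

Lemma idist_sym Om x y : (idist Om x y <= idist Om y x)%E.
Proof.
apply/ereal_infP => l [gam P <-].
have [P' H] := path_rev P.
exact: le_trans (idist_le P') H.
Qed.

Lemma idist_refl Om x : closure Om x -> (idist Om x x <= 0)%E.
Proof.
move=> Ex.
have P : path_in (closure Om) x x (fun=> x).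
  split; first by apply/withinP => s _ e e0; exists 1 => // s' _ _; rewrite subrr normr0.
  by split.
apply: le_trans (idist_le P) _.
apply: path_length_le => m t _; rewrite /PS big1 // => k _.
by rewrite subrr enorm0.
Qed.

Lemma idist_len Om gam L a b :
  {within `[0, 1], continuous gam} ->
  (forall t, 0 <= t <= 1 -> closure Om (gam t)) ->
  lenle gam 0 1 L -> 0 <= a -> a <= b -> b <= 1 ->
  (idist Om (gam a) (gam b) <= (len gam a b)%:E)%E.
Proof.
move=> Hc HE HL a0 ab b1.
pose bet := fun s => gam (a + s * (b - a)).
have ba0 : 0 <= b - a by rewrite subr_ge0.
have inab : forall s, 0 <= s <= 1 -> 0 <= a + s * (b - a) <= 1.
  move=> s /andP[s0 s1]; apply/andP; split.
    by rewrite addr_ge0 // mulr_ge0.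
  have : s * (b - a) <= 1 * (b - a) by rewrite ler_wpM2r.
  lra.
have P : path_in (closure Om) (gam a) (gam b) bet.
  split.
    apply/withinP => s /= /[!in_itv] /= s01 e e0.
    have := (proj1 (withinP _ gam) Hc) (a + s * (b - a)).
    rewrite /= in_itv /=; move=> /(_ (inab s s01) e e0) [d d0 Hd].
    have bap : 0 < b - a + 1 by lra.
    exists (d / (b - a + 1)); first by rewrite divr_gt0.
    move=> s' /= /[!in_itv] /= s'01 ss'.
    apply: Hd; first by rewrite /= in_itv /=; exact: inab.
    have -> : a + s * (b - a) - (a + s' * (b - a)) = (s - s') * (b - a) by ring.
    rewrite normrM (ger0_norm ba0).
    move: ss'; rewrite ltr_pdivlMr // => h.
    have := normr_ge0 (s - s'); nra.
  split; first by move=> s s01; apply: HE; exact: inab.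
  by rewrite /bet mul0r addr0 mul1r addrC subrK.
apply: le_trans (idist_le P) _.
apply: path_length_le => m t [t0 tm mon].
have Pt : part a b m (fun k => a + t k * (b - a)).
  split; first by rewrite t0 mul0r addr0.
  + by rewrite tm mul1r addrC subrK.
  + by move=> k km; rewrite lerD2l ler_wpM2r // mon.
have h := len_ub HL a0 ab b1 Pt. exact h.
Qed.

End Paths.

Section Chain.
Context {R : realType} {n : nat}.
Notation V := 'rV[R]_n.

Definition chain (Om : set V) (eps : R) (x : V) (N : nat) : Prop :=
  exists z : nat -> V, z 0%N = x /\ bdry Om (z N) /\
   forall j, (j < N)%N -> closure Om (z j.+1) /\ (idist Om (z j) (z j.+1) < eps%:E)%E.

Lemma min_step (a h c : R) : 0 <= h -> Order.min (a + h) c - Order.min a c <= h.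
Proof.
move=> h0; have [h1|h1] := leP (a + h) c.
  have h2 : a <= c by lra.
  rewrite (min_l h2); lra.
have [h2|h2] := leP a c; lra.
Qed.

Lemma chain_from_path (Om : set V) x y gam L eps N :
  path_in (closure Om) x y gam -> lenle gam 0 1 L -> bdry Om y -> 0 < eps ->
  L <= N%:R * (eps / 2) -> chain Om eps x N.+1.
Proof.
move=> [Hc [HE [g0 g1]]] HL By e0 LN.
pose tau j := Order.min (j%:R * (eps / 2)) (phi gam 1).
pose pick a v := xget 1 [set c | a <= c <= 1 /\ phi gam c = v].
pose s := fix s j := match j with 0%N => 0 | j'.+1 => pick (s j') (tau j'.+1) end.
have phi1 : 0 <= phi gam 1 by have h := len_ge0 HL (lexx 0) ler01 (lexx 1); exact h.
have phi1L : phi gam 1 <= L by have h := len_le (b := 1) (ler01) HL; exact h.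
have step : forall j, 0 <= s j <= 1 -> phi gam (s j) = tau j ->
     s j <= s j.+1 <= 1 /\ phi gam (s j.+1) = tau j.+1.
  move=> j /andP[sj0 sj1] pj.
  have h1 : phi gam (s j) <= tau j.+1.
    rewrite pj; apply: le_min2 => //; rewrite ler_wpM2r ?ler_nat //; lra.
  have h2 : tau j.+1 <= phi gam 1 by rewrite ge_min lexx orbT.
  have [c [cin cv]] := phi_ivt HL Hc sj0 sj1 h1 h2.
  exact: (xgetI 1 (P := [set c | s j <= c <= 1 /\ phi gam c = tau j.+1]) (conj cin cv)).
have inv : forall j, 0 <= s j <= 1 /\ phi gam (s j) = tau j.
  elim => [|j [/andP[h1 h2] h3]].
    split; first by rewrite /= lexx ler01.
    by rewrite /= (phi0 HL) /tau mul0r min_l.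
  have [/andP[h4 h5] h6] := step j (introT andP (conj h1 h2)) h3.
  by split => //; rewrite h5 andbT; apply: le_trans h4.
have mono : forall j, s j <= s j.+1.
  move=> j; have [/andP[h1 h2] h3] := inv j.
  by have [/andP[h4 h5] h6] := step j (introT andP (conj h1 h2)) h3.
pose z j := if (j <= N)%N then gam (s j) else gam 1.
exists z; split; first by rewrite /z leq0n /= g0.
split; first by rewrite /z ltnn g1.
move=> j jN.
have [/andP[sj0 sj1] pj] := inv j.
have [/andP[sj0' sj1'] pj'] := inv j.+1.
split.
  rewrite /z; case: ifP => _; apply: HE => //; first by rewrite sj0' sj1'.
  by rewrite ler01 lexx.
rewrite /z; case: (ltnP j N) => hj.
- rewrite (ltnW hj).
  have h := idist_len Hc HE HL sj0 (mono j) sj1'.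
  apply: le_lt_trans h _; rewrite lte_fin.
  have h' := phi_diff HL sj0 (mono j) sj1'.
  rewrite -h' pj pj' /tau -addn1 natrD mulrDl mul1r.
  have e2 : 0 <= eps / 2 by rewrite divr_ge0 // ltW.
  have := min_step (j%:R * (eps / 2)) (phi gam 1) e2.
  lra.
- have hj' : j = N by lia.
  rewrite hj' leqnn.
  have h := idist_len Hc HE HL sj0 sj1 (lexx 1).
  rewrite -hj'; apply: le_lt_trans h _; rewrite lte_fin.
  have h' := phi_diff HL sj0 sj1 (lexx 1).
  rewrite -h' pj /tau hj' min_r; last exact: le_trans phi1L LN.
  by rewrite subrr.
Qed.

End Chain.

Section ChainW.
Context {R : realType} {n : nat}.
Notation V := 'rV[R]_n.

Lemma chain_width (Om : set V) (W eps : R) x : (width Om < W%:E)%E -> Om x -> 0 < eps ->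
  exists N : nat, N%:R <= 2 * W / eps + 2 /\ chain Om eps x N.
Proof.
move=> HW Ox e0.
have h1 : (ereal_inf [set idist Om y x | y in bdry Om] < W%:E)%E.
  apply: le_lt_trans HW; apply: le_ereal_sup_tmp.
  by exists (ereal_inf [set idist Om y x | y in bdry Om]) => //; exists x.
have [_ [y By <-] h2] := ereal_inf_lt h1.
have [_ [gam Pg <-] h3] := ereal_inf_lt h2.
have [Pb Hb] := path_rev Pg.
have HL : lenle (fun s => gam (1 - s)) 0 1 W.
  apply: path_length_lenle; apply: le_trans Hb _; exact: ltW.
have W0 : 0 <= W.
  have := PS_ge0 (fun s => gam (1 - s)) 1 (part1 0 1).
  have := HL 1%N (part1 0 1) (part1P ler01); lra.
set N := (Num.truncn (2 * W / eps)).+1.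
have hN : 2 * W / eps < N%:R by exact: truncnS_gt.
have hN2 : N%:R <= 2 * W / eps + 1.
  rewrite /N -addn1 natrD lerD2r truncn_le.
  by rewrite divr_ge0 ?mulr_ge0 // ltW.
have WN : W <= N%:R * (eps / 2).
  have h : 2 * W < N%:R * eps by rewrite -ltr_pdivrMr.
  have -> : N%:R * (eps / 2) = (N%:R * eps) / 2 by rewrite mulrA.
  rewrite ler_pdivlMr //; lra.
exists N.+1; split.
  by rewrite -addn1 natrD; lra.
exact: chain_from_path Pb HL By e0 WN.
Qed.

End ChainW.

Section Barrier.
Context {R : realType} {n : nat}.
Notation V := 'rV[R]_n.
Variables (Om : set V) (eps : R).

Lemma chain_min x : (exists N, chain Om eps x N) ->
  exists N, chain Om eps x N /\ forall M, chain Om eps x M -> (N <= M)%N.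
Proof.
move=> ex.
have ex' : exists N, (fun N => `[< chain Om eps x N >]) N.
  by case: ex => N h; exists N; apply/asboolP.
case: (ex_minnP ex') => m /asboolP hm hmin.
exists m; split => // M hM; apply: hmin; exact/asboolP.
Qed.

Definition kk x : nat := xget 0%N [set N | chain Om eps x N /\ forall M, chain Om eps x M -> (N <= M)%N].

Lemma kkP x : (exists N, chain Om eps x N) ->
  chain Om eps x (kk x) /\ forall M, chain Om eps x M -> (kk x <= M)%N.
Proof. by move=> /chain_min [N HN]; exact: (xgetI 0%N (P := [set N | chain Om eps x N /\ forall M, chain Om eps x M -> (N <= M)%N]) HN). Qed.

Lemma chain0 x : bdry Om x -> chain Om eps x 0.
Proof. by move=> Bx; exists (fun=> x); split => //; split. Qed.

Lemma chain_shift x k : chain Om eps x k.+1 ->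
  exists z1, (closure Om z1 /\ (idist Om x z1 < eps%:E)%E) /\ chain Om eps z1 k.
Proof.
move=> [z [z0 [Bz H]]]; exists (z 1%N); split.
  by have [h1 h2] := H 0%N erefl; rewrite -z0.
exists (fun j => z j.+1); split => //; split => // j jk; exact: H.
Qed.

Lemma chain_cons x z k : closure Om x -> (idist Om x z < eps%:E)%E -> chain Om eps x k ->
  chain Om eps z k.+1.
Proof.
move=> Ex dxz [w [w0 [Bw H]]].
exists (fun j => if j is j'.+1 then w j' else z); split => //; split => //.
case=> [|j] jk.
  by rewrite w0; split => //; apply: le_lt_trans (idist_sym Om z x) dxz.
exact: H.
Qed.

End Barrier.

Definition bcoef {R : realType} (eps F : R) := eps ^+ 2 * (F + 1) / 2.

Section Compare.
Context {R : realType} {n : nat}.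
Notation V := 'rV[R]_n.
Variables (Om : set V) (eps F G Mu : R) (K : nat) (u f : V -> R).
Hypotheses (Hopen : open Om) (e0 : 0 < eps) (F0 : 0 <= F)
 (Hu : forall x, closure Om x -> `|u x| <= Mu)
 (Hf : forall x, Om x -> - F <= f x)
 (Hg : forall y, bdry Om y -> u y <= G)
 (Heq : forall x, Om x -> dlap Om eps u x = eps ^+ 2 * f x)
 (HK : forall x, closure Om x -> exists N, (N <= K)%N /\ chain Om eps x N).

Local Notation b := (bcoef eps F).
Let phi (j : nat) : R := b * (j%:R * ((2 * K).+1%:R - j%:R)).
Let psi (x : V) : R := phi (kk Om eps x).

Lemma b_gt0 : 0 < b.
Proof. by rewrite /bcoef divr_gt0 // mulr_gt0 ?exprn_gt0 // ltr_wpDl. Qed.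

Lemma phi_ge0 j : (j <= (2 * K).+1)%N -> 0 <= phi j.
Proof.
move=> jK; rewrite /phi; apply: mulr_ge0; first exact: ltW b_gt0.
by apply: mulr_ge0 => //; rewrite subr_ge0 ler_nat.
Qed.

Lemma phi_le_max j : (j <= (2 * K).+1)%N -> phi j <= b * ((2 * K).+1%:R) ^+ 2.
Proof.
move=> jK; rewrite /phi; apply: ler_wpM2l; first exact: ltW b_gt0.
set M : R := (2 * K).+1%:R.
have h1 : (j%:R : R) <= M by rewrite ler_nat.
have h2 : (0 : R) <= j%:R by [].
apply: (le_trans (y := j%:R * M)); first by apply: ler_wpM2l => //; lra.
by rewrite expr2; apply: ler_wpM2r => //; lra.
Qed.

Lemma phi_mono j j' : (j <= j')%N -> (j + j' <= (2 * K).+1)%N -> phi j <= phi j'.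
Proof.
move=> jj' s; rewrite /phi; apply: ler_wpM2l; first exact: ltW b_gt0.
set M : R := (2 * K).+1%:R.
have h1 : (j%:R : R) <= j'%:R by rewrite ler_nat.
have h2 : (j%:R : R) + j'%:R <= M by rewrite -natrD ler_nat.
rewrite -subr_ge0.
have -> : j'%:R * (M - j'%:R) - j%:R * (M - j%:R) = (j'%:R - j%:R) * (M - j%:R - j'%:R) :> R by ring.
by apply: mulr_ge0; lra.
Qed.

Lemma phi_second k : phi k + phi k.+2 - 2 * phi k.+1 = - (2 * b).
Proof.
rewrite /phi.
have -> : (k.+2%:R : R) = k%:R + 2 by rewrite -addn2 natrD.
have -> : (k.+1%:R : R) = k%:R + 1 by rewrite -addn1 natrD.
move: (bcoef eps F) ((2 * K).+1%:R) (k%:R) => bb M kr.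
ring.
Qed.

Lemma open_nbdry x : Om x -> ~ bdry Om x.
Proof.
move=> Ox [_ H]; apply: H.
by move: Hopen; rewrite openE => /(_ x Ox).
Qed.

Lemma closure_split x : closure Om x -> ~ bdry Om x -> Om x.
Proof.
move=> Ex nB; apply: interior_subset.
by apply: contrapT => h; apply: nB; split.
Qed.

Lemma kk_le x : closure Om x -> (kk Om eps x <= K)%N /\ chain Om eps x (kk Om eps x)
  /\ forall M, chain Om eps x M -> (kk Om eps x <= M)%N.
Proof.
move=> Ex; have [N [NK cN]] := HK Ex.
have [h1 h2] := kkP (ex_intro _ N cN).
by split => //; apply: leq_trans (h2 N cN) NK.
Qed.

Lemma psi_ge0 x : closure Om x -> 0 <= psi x.
Proof. by move=> Ex; apply: phi_ge0; have [h _] := kk_le Ex; lia. Qed.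

Lemma iball_self x : closure Om x -> iball Om x eps x.
Proof. by move=> Ex; split => //; apply: le_lt_trans (idist_refl Ex) _; rewrite lte_fin. Qed.

Lemma compare x0 : closure Om x0 -> u x0 <= G + bcoef eps F * ((2 * K).+1%:R) ^+ 2.
Proof.
move=> Ex0.
pose SS := [set u x - psi x | x in closure Om].
have SSn : SS !=set0 by exists (u x0 - psi x0); exists x0.
have SSub : has_sup SS.
  split => //; exists Mu => _ [x Ex <-].
  have := psi_ge0 Ex; have := Hu Ex; rewrite ler_norml => /andP[_ h]; lra.
have SSle : forall x, closure Om x -> u x - psi x <= sup SS.
  by move=> x Ex; apply: sup_upper_bound => //; exists x.
suff SG : sup SS <= G.
  have := SSle x0 Ex0; have := phi_le_max (j := kk Om eps x0).
  have [h _] := kk_le Ex0.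
  move=> /(_ ltac:(lia)); rewrite -/(psi x0); lra.
rewrite leNgt; apply/negP => GS.
pose eta := Order.min (eps ^+ 2 / 4) (sup SS - G).
have eta0 : 0 < eta by rewrite lt_min divr_gt0 ?exprn_gt0 //= subr_gt0.
have [_ [x Ex <-] hx] := sup_adherent eta0 SSub.
have nB : ~ bdry Om x.
  move=> Bx; have [_ [c0 _]] := kk_le Ex.
  have k0 : kk Om eps x = 0%N by have [_ [_ h]] := kk_le Ex; have := h 0%N (chain0 eps Bx); lia.
  move: hx; rewrite /psi k0 /phi mul0r mulr0 subr0.
  have := Hg Bx; have : eta <= sup SS - G by rewrite ge_min lexx orbT.
  lra.
have Ox := closure_split Ex nB.
have [kK [ck kmin]] := kk_le Ex.
move: kK ck kmin; case Ek: (kk Om eps x) => [|k'] kK ck kmin.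
  by case: ck => z [z0 [Bz _]]; apply: nB; rewrite -z0.
have [z1 [[Ez1 dz1] cz1]] := chain_shift ck.
have [kz1K [_ kz1min]] := kk_le Ez1.
have kz1 := kz1min _ cz1.
pose U := [set u y | y in iball Om x eps].
have Un : U !=set0 by exists (u x); exists x => //; exact: iball_self.
have Ulb : has_lbound U.
  exists (- Mu) => _ [y [Ey _] <-]; have := Hu Ey; rewrite ler_norml => /andP[h _]; exact: h.
have Uub : forall w, iball Om x eps w -> u w <= sup SS + phi k'.+2.
  move=> w [Ew dw].
  have cw := chain_cons Ex dw ck.
  have [kwK [_ kwmin]] := kk_le Ew.
  have kw := kwmin _ cw.
  have := SSle _ Ew; rewrite /psi.
  have := phi_mono (j := kk Om eps w) (j' := k'.+2) ltac:(lia) ltac:(lia).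
  lra.
have hinf : inf U <= u z1.
  by apply: ge_inf => //; exists z1.
have hsup : sup U <= sup SS + phi k'.+2.
  by apply: ge_sup => // _ [w Hw <-]; exact: Uub.
have hz1 : u z1 <= sup SS + phi k'.
  have := SSle _ Ez1; rewrite /psi.
  have := phi_mono (j := kk Om eps z1) (j' := k') ltac:(lia) ltac:(lia).
  lra.
have hx' : sup SS - eta < u x - phi k'.+1 by move: hx; rewrite /psi Ek.
have heq := Heq Ox; rewrite /dlap -/U in heq.
have hsec := phi_second k'.
have eta1 : eta <= eps ^+ 2 / 4 by rewrite ge_min lexx.
have fx := Hf Ox.
have e2 : 0 < eps ^+ 2 by rewrite exprn_gt0.
have : - F * eps ^+ 2 <= f x * eps ^+ 2 by rewrite ler_wpM2r // ltW.
rewrite /bcoef in hsec.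
lra.
Qed.

End Compare.

Section Final.
Context {R : realType} {n : nat}.
Notation V := 'rV[R]_n.

Lemma dlapN (Om : set V) eps (u : V -> R) x :
  dlap Om eps (fun y => - u y) x = - dlap Om eps u x.
Proof.
rewrite /dlap.
set B := iball Om x eps.
have h1 : -%R @` [set - u y | y in B] = [set u y | y in B].
  apply/seteqP; split => z.
    by case=> _ [y Hy <-] <-; exists y => //; rewrite opprK.
  by case=> y Hy <-; exists (- u y); [exists y | rewrite opprK].
have h2 : inf [set - u y | y in B] = - sup [set u y | y in B] by rewrite /inf h1.
have h3 : sup [set - u y | y in B] = - inf [set u y | y in B].
  rewrite /inf opprK; congr sup; apply/seteqP; split => z.
    by case=> y Hy <-; exists (u y) => //; exists y.
  by case=> _ [y Hy <-] <-; exists y.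
rewrite h2 h3; ring.
Qed.

Lemma eps_small (eps : nat -> R) : eps @ \oo --> 0 -> exists N0, forall i, (N0 <= i)%N -> eps i <= 1.
Proof.
move/cvgrPdist_lt => /(_ 1 ltr01) [N0 _ HN0].
exists N0 => i Hi; have := HN0 i Hi; rewrite /= sub0r normrN => h.
exact: le_trans (ler_norm _) (ltW h).
Qed.

Lemma bound_small (E : set V) (u : nat -> V -> R) N0 :
  (forall i, exists M : R, forall x, E x -> `|u i x| <= M) ->
  exists M : R, forall i x, (i < N0)%N -> E x -> `|u i x| <= M.
Proof.
move=> H; elim: N0 => [|N IH]; first by exists 0 => i x.
have [M1 H1] := IH; have [M2 H2] := H N.
exists (Order.max M1 M2) => i x iN Ex.
rewrite ltnS leq_eqVlt in iN; case/orP: iN => [/eqP ->|iN].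
  by rewrite le_max H2 ?orbT.
by rewrite le_max H1.
Qed.

End Final.

Unset Implicit Arguments.

Theorem lemma5p1 (R : realType) (n : nat) (Omega : set 'rV[R]_n)
  (f g : 'rV[R]_n -> R) (eps : nat -> R) (u : nat -> 'rV[R]_n -> R) :
  open Omega -> connected Omega -> Omega !=set0 ->
  (width Omega < +oo)%E ->
  (exists M : R, forall x, Omega x -> `|f x| <= M) ->
  {within bdry Omega, continuous g} ->
  (exists M : R, forall y, bdry Omega y -> `|g y| <= M) ->
  (forall i, 0 < eps i) -> eps @ \oo --> 0 ->
  (forall i, exists M : R, forall x, closure Omega x -> `|u i x| <= M) ->
  (forall i x, Omega x -> dlap Omega (eps i) (u i) x = eps i ^+ 2 * f x) ->
  (forall i y, bdry Omega y -> u i y = g y) ->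
  exists M : R, forall i x, closure Omega x -> `|u i x| <= M.
Proof.
move=> Hopen _ _ HW [Mf HMf] _ [Mg HMg] He0 Hcv HuB Heq Hbd.
have [W [W0 HW']] : exists W : R, 0 < W /\ (width Omega < W%:E)%E.
  move: HW; case: (width Omega) => [r| |] // _.
    exists (Order.max r 0 + 1); split.
      have : 0 <= Order.max r 0 by rewrite le_max lexx orbT.
      lra.
    rewrite lte_fin; have : r <= Order.max r 0 by rewrite le_max lexx.
    lra.
  by exists 1; split => //; rewrite ltNyr.
set F := Order.max Mf 0.
have F0 : 0 <= F by rewrite le_max lexx orbT.
have hf : forall x, Omega x -> - F <= f x /\ f x <= F.
  move=> x Ox; have := HMf x Ox; rewrite ler_norml => /andP[h1 h2].
  have : Mf <= F by rewrite le_max lexx.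
  split; lra.
set B := (F + 1) / 2 * (4 * W + 5) ^+ 2.
have main : forall i, eps i <= 1 -> forall x, closure Omega x -> `|u i x| <= Mg + B.
  move=> i ei x Ex.
  set e := eps i; have e0 : 0 < e := He0 i.
  set K := Num.truncn (2 * W / e + 2).
  have KW : 0 <= 2 * W / e + 2 by rewrite addr_ge0 // divr_ge0 ?mulr_ge0 // ltW.
  have HK : forall y, closure Omega y -> exists N, (N <= K)%N /\ chain Omega e y N.
    move=> y Ey; have [By|By] := pselect (bdry Omega y).
      by exists 0%N; split => //; exact: chain0.
    have Oy := closure_split Ey By.
    have [N [HN cN]] := chain_width HW' Oy e0.
    by exists N; split => //; rewrite truncn_ge_nat.
  have KB : bcoef e F * ((2 * K).+1%:R) ^+ 2 <= B.
    have hK : (K%:R : R) <= 2 * W / e + 2 by rewrite truncn_le.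
    have h2K : ((2 * K).+1%:R : R) = 2 * K%:R + 1 by rewrite -addn1 natrD natrM.
    have hE : e * (2 * K%:R + 1) <= 4 * W + 5.
      have : e * K%:R <= e * (2 * W / e + 2) by rewrite ler_wpM2l // ltW.
      have -> : e * (2 * W / e + 2) = 2 * W + 2 * e by field; rewrite gt_eqF.
      have -> : e * (2 * K%:R + 1) = 2 * (e * K%:R) + e by ring.
      set eK := e * K%:R; move=> h; have ei' : e <= 1 := ei; lra.
    have hE0 : 0 <= e * (2 * K%:R + 1) by rewrite mulr_ge0 // ltW.
    rewrite /bcoef /B h2K.
    have -> : e ^+ 2 * (F + 1) / 2 * (2 * K%:R + 1) ^+ 2 = (F + 1) / 2 * (e * (2 * K%:R + 1)) ^+ 2.
      by rewrite exprMn; ring.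
    apply: ler_wpM2l; first by rewrite divr_ge0 // addr_ge0.
    by rewrite !expr2; apply: ler_pM.
  have [Mu HMu] := HuB i.
  have up : u i x <= Mg + B.
    have hg : forall y, bdry Omega y -> u i y <= Mg.
      move=> y By; rewrite (Hbd i y By); exact: le_trans (ler_norm _) (HMg y By).
    have hf1 : forall x, Omega x -> - F <= f x by move=> y Oy; exact: proj1 (hf y Oy).
    have h := compare (G := Mg) e0 F0 HMu hf1 hg (Heq i) HK Ex.
    lra.
  have lo : - u i x <= Mg + B.
    have HMu' : forall x, closure Omega x -> `|(fun y => - u i y) x| <= Mu.
      by move=> y Ey /=; rewrite normrN; exact: HMu.
    have hf' : forall x, Omega x -> - F <= (fun y => - f y) x.
      by move=> y Oy /=; have := hf y Oy; lra.
    have hg' : forall y, bdry Omega y -> (fun y => - u i y) y <= Mg.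
      move=> y By /=; rewrite (Hbd i y By); have := HMg y By; rewrite ler_norml => /andP[h1 h2]; lra.
    have heq' : forall x, Omega x -> dlap Omega e (fun y => - u i y) x = e ^+ 2 * (fun y => - f y) x.
      by move=> y Oy /=; rewrite dlapN (Heq i y Oy) mulrN.
    have h := compare (G := Mg) e0 F0 HMu' hf' hg' heq' HK Ex.
    simpl in h; lra.
  by rewrite ler_norml; apply/andP; split; lra.
have [N0 HN0] := eps_small Hcv.
have [M1 HM1] := bound_small (E := closure Omega) N0 HuB.
exists (Order.max M1 (Mg + B)) => i x Ex.
case: (ltnP i N0) => hi.
  by rewrite le_max HM1.
by rewrite le_max main ?orbT // HN0.
Qed.
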